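(* In the Setting below and under the Standing Assumption, for each fixed $p\in\mathbb{Z}$ there exists a constant $C\ge 0$ depending on $f$ such that $m_{min}(x,N,p)\le C\cdot N+o(N)$ as $N\to\infty$, for all $x\in\mathbb{Q}\cap D$. Consequently $\sigma(x,p)\le C$ for all $x\in\mathbb{Q}\cap D$, and the same bound holds for $\sigma(x)$ whenever it exists.
   Context: Setting. $D\subseteq\mathbb{R}$ is a compact interval and $f:D\to D$ is twice continuously differentiable on $D$ with $f''$ bounded. For $x\in D$ the orbit is $x_0=x$, $x_{n+1}=f(x_n)$. A floating-point number of precision $m$ is a real $s\cdot 2^{e-m}$ with $s,e\in\mathbb{Z}$, $|s|\le 2^m-1$; $rd_m(y)$ denotes rounding of $y$ to a nearest floating-point number of precision $m$. Let $L(a,e):=\sup\{|f'(y)|: y\in[a-e,a+e]\cap D\}$ and fix a function $\bar L$ with $L(a,e)\le\bar L(a,e)\le\min(\bar L_{max},\,L(a,e)+Ke)$ for constants $\bar L_{max},K\ge0$. For $x\in\mathbb{Q}\cap D$ and precision $m\ge1$ the computed sequence is $\hat x_0=rd_m(x)$, $\bar e_0=2^{-m}|\hat x_0|$, $\hat x_{n+1}=rd_m(f(\hat x_n))$, $\bar e_{n+1}=\bar L(\hat x_n,\bar e_n)\bar e_n+2^{-m}|\hat x_{n+1}|$ (all $\hat x_n$ assumed in $D$). For $N\in\mathbb{N}$, $p\in\mathbb{Z}$, $m_{min}(x,N,p)$ is the least $m\ge1$ such that the sequence computed at precision $m$ satisfies $\bar e_n\le\frac{10^{-p}}{1+10^{-p}}|\hat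 x_n|$ for all $n=0,\dots,N$. The loss of significance rate: $\sigma(x,p):=\limsup_{N\to\infty} m_{min}(x,N,p)/N$ and $\sigma(x):=\lim_{p\to\infty}\sigma(x,p)$. Standing Assumption: for the orbit of $x$, $x_n\ne0$ for all $n$ and $\lim_{N\to\infty}\mathrm{ld}(\min\{|x_n|:0\le n\le N\})/N=0$, where $\mathrm{ld}=\log_2$. *)

(* Defs.v *)
From Stdlib Require Import Reals Lra Lia ZArith QArith Qreals.
Open Scope R_scope.

Definition inD (a b y : R) : Prop := a <= y <= b.

(* One-sided-at-the-endpoints derivative: g has derivative g' at every point
   of D, where difference quotients are taken with x+h in D. *)
Definition deriv_within (D : R -> Prop) (g g' : R -> R) : Prop :=
  forall x, D x -> forall eps, 0 < eps -> exists delta, 0 < delta /\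
    forall h, h <> 0 -> Rabs h < delta -> D (x + h) ->
      Rabs ((g (x + h) - g x) / h - g' x) < eps.

Definition cont_within (D : R -> Prop) (g : R -> R) : Prop :=
  forall x, D x -> forall eps, 0 < eps -> exists delta, 0 < delta /\
    forall y, D y -> Rabs (y - x) < delta -> Rabs (g y - g x) < eps.

Definition is_float (m : nat) (r : R) : Prop :=
  exists s e : Z, (Z.abs s <= 2 ^ Z.of_nat m - 1)%Z /\
    r = IZR s * powerRZ 2 (e - Z.of_nat m).

(* rd m y is a nearest floating-point number of precision m to y
   (any tie-breaking rule is allowed). *)
Definition is_rounding (rd : nat -> R -> R) : Prop :=
  forall (m : nat) (y : R), (1 <= m)%nat ->
    is_float m (rd m y) /\
    forall g, is_float m g -> Rabs (rd m y - y) <= Rabs (g - y).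

(* The set {|f'(y)| : y in [c-e,c+e] ∩ D}; L(c,e) is its supremum. *)
Definition Lset (a b : R) (f1 : R -> R) (c e : R) : R -> Prop :=
  fun z => exists y, inD a b y /\ c - e <= y <= c + e /\ z = Rabs (f1 y).

Definition Lbar_spec (a b : R) (f1 : R -> R) (Lbar : R -> R -> R)
  (Lmax K : R) : Prop :=
  forall c e l, inD a b c -> 0 <= e -> is_lub (Lset a b f1 c e) l ->
    l <= Lbar c e /\ Lbar c e <= Rmin Lmax (l + K * e).

Fixpoint orbit (f : R -> R) (x : R) (n : nat) : R :=
  match n with
  | O => x
  | S k => f (orbit f x k)
  end.

Fixpoint minabs (f : R -> R) (x : R) (N : nat) : R :=
  match N with
  | O => Rabs x
  | S k => Rmin (minabs f x k) (Rabs (orbit f x (S k)))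
  end.

Definition ld (y : R) : R := ln y / ln 2.

Definition standing_assumption (f : R -> R) (x : R) : Prop :=
  (forall n, orbit f x n <> 0) /\
  Un_cv (fun N => ld (minabs f x N) / INR N) 0.

Definition is_rational (x : R) : Prop := exists q : Q, Q2R q = x.

Fixpoint xhat (f : R -> R) (rd : nat -> R -> R) (m : nat) (x : R) (n : nat) : R :=
  match n with
  | O => rd m x
  | S k => rd m (f (xhat f rd m x k))
  end.

Fixpoint ebar (f : R -> R) (rd : nat -> R -> R) (Lbar : R -> R -> R)
  (m : nat) (x : R) (n : nat) : R :=
  match n with
  | O => / 2 ^ m * Rabs (rd m x)
  | S k => Lbar (xhat f rd m x k) (ebar f rd Lbar m x k) * ebar f rd Lbar m x k
           + / 2 ^ m * Rabs (xhat f rd m x (S k))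
  end.

Definition accurate (f : R -> R) (rd : nat -> R -> R) (Lbar : R -> R -> R)
  (m : nat) (x : R) (N : nat) (p : Z) : Prop :=
  forall n, (n <= N)%nat ->
    ebar f rd Lbar m x n
      <= powerRZ 10 (- p) / (1 + powerRZ 10 (- p)) * Rabs (xhat f rd m x n).

Definition is_mmin (f : R -> R) (rd : nat -> R -> R) (Lbar : R -> R -> R)
  (x : R) (N : nat) (p : Z) (m : nat) : Prop :=
  (1 <= m)%nat /\ accurate f rd Lbar m x N p /\
  forall m', (1 <= m')%nat -> (m' < m)%nat -> ~ accurate f rd Lbar m' x N p.

Definition is_limsup (u : nat -> R) (l : R) : Prop :=
  (forall eps, 0 < eps -> exists N0, forall N, (N0 <= N)%nat -> u N <= l + eps) /\
  (forall eps, 0 < eps -> forall N0, exists N, (N0 <= N)%nat /\ l - eps <= u N).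

Definition is_sigma_p (f : R -> R) (rd : nat -> R -> R) (Lbar : R -> R -> R)
  (x : R) (p : Z) (s : R) : Prop :=
  exists mm : nat -> nat, (forall N, is_mmin f rd Lbar x N p (mm N)) /\
    is_limsup (fun N => INR (mm N) / INR N) s.

Definition is_sigma (f : R -> R) (rd : nat -> R -> R) (Lbar : R -> R -> R)
  (x : R) (s : R) : Prop :=
  exists sig : Z -> R, (forall p, is_sigma_p f rd Lbar x p (sig p)) /\
    forall eps, 0 < eps -> exists P : Z, forall p, (P <= p)%Z -> Rabs (sig p - s) < eps.

(* Main.v *)
Require Import Defs.
From Stdlib Require Import Reals ZArith QArith Qreals Lra Lia Classical.
Open Scope R_scope.

Lemma local_bound (a b : R) (g g' : R -> R) :
  deriv_within (inD a b) g g' -> forall t, inD a b t -> forall eps, 0 < eps ->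
  exists delta, 0 < delta /\ forall u, inD a b u -> Rabs (u - t) < delta ->
    Rabs (g u - g t) <= (Rabs (g' t) + eps) * Rabs (u - t).
Proof.
  intros Hd t Ht eps Heps.
  destruct (Hd t Ht eps Heps) as [d [Hd0 Hd1]].
  exists d; split; auto. intros u Hu Hut.
  destruct (Req_dec u t) as [->|Hne].
  - rewrite !Rminus_diag, Rabs_R0. lra.
  - assert (Hh : u - t <> 0) by lra.
    assert (Hx : t + (u - t) = u) by ring.
    specialize (Hd1 (u - t) Hh Hut). rewrite Hx in Hd1.
    specialize (Hd1 Hu).
    assert (E : g u - g t = (g u - g t) / (u - t) * (u - t)) by (field; auto).
    rewrite E, Rabs_mult. apply Rmult_le_compat_r. apply Rabs_pos.
    assert (Rabs ((g u - g t) / (u - t)) <= Rabs ((g u - g t) / (u - t) - g' t) + Rabs (g' t)).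
    { replace ((g u - g t) / (u - t)) with (((g u - g t) / (u - t) - g' t) + g' t) at 1 by ring.
      apply Rabs_triang. }
    lra.
Qed.

Lemma lip_half (a b : R) (g g' : R -> R) (L : R) :
  deriv_within (inD a b) g g' -> (forall t, inD a b t -> Rabs (g' t) <= L) ->
  forall x y, inD a b x -> inD a b y -> x <= y -> forall eps, 0 < eps ->
  Rabs (g y - g x) <= (L + eps) * (y - x).
Proof.
  intros Hd HL x y Hx Hy Hxy eps Heps.
  set (K' := L + eps).
  set (E := fun t => x <= t <= y /\ Rabs (g t - g x) <= K' * (t - x)).
  assert (HB : bound E) by (exists y; intros t [Ht _]; lra).
  assert (HE : exists t, E t).
  { exists x. split. lra. rewrite Rminus_diag, Rabs_R0. lra. }
  destruct (completeness E HB HE) as [s [Hs1 Hs2]].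
  assert (Hxs : x <= s) by (apply Hs1; destruct HE; unfold E; split; [lra|];
     rewrite Rminus_diag, Rabs_R0; lra).
  assert (Hsy : s <= y) by (apply Hs2; intros t [Ht _]; lra).
  assert (HsD : inD a b s) by (unfold inD in *; lra).
  destruct (local_bound a b g g' Hd s HsD eps Heps) as [d [Hd0 Hd1]].
  assert (Hloc : forall u, inD a b u -> Rabs (u - s) < d -> Rabs (g u - g s) <= K' * Rabs (u - s)).
  { intros u Hu Hus. specialize (Hd1 u Hu Hus). specialize (HL s HsD).
    apply Rle_trans with (1 := Hd1). apply Rmult_le_compat_r. apply Rabs_pos. unfold K'; lra. }
  assert (HK : 0 <= K').
  { unfold K'. specialize (HL x Hx). pose proof (Rabs_pos (g' x)). lra. }
  assert (HEs : E s).
  { assert (Ht : exists t, E t /\ s - d < t).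
    { apply NNPP; intro Hn.
      assert (s <= s - d).
      { apply Hs2. intros t Et. destruct (Rle_dec t (s - d)); auto.
        exfalso; apply Hn; exists t; split; auto; lra. }
      lra. }
    destruct Ht as [t [[Ht1 Ht2] Ht3]].
    assert (Hts : t <= s) by (apply Hs1; split; auto).
    split. lra.
    assert (HtD : inD a b t) by (unfold inD in *; lra).
    assert (Rabs (t - s) < d) by (rewrite Rabs_left1; lra).
    specialize (Hloc t HtD H).
    rewrite (Rabs_left1 (t - s)) in Hloc by lra.
    replace (g s - g x) with ((g t - g x) - (g t - g s)) by ring.
    eapply Rle_trans. apply Rabs_triang. rewrite Rabs_Ropp. nra. }
  destruct (Rle_lt_or_eq_dec s y Hsy) as [Hlt|Heq].
  - exfalso.
    set (t' := Rmin (s + d / 2) y).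
    assert (Ht1 : s < t') by (unfold t'; apply Rmin_glb_lt; lra).
    assert (Ht2 : t' <= y) by (unfold t'; apply Rmin_r).
    assert (Ht3 : t' <= s + d / 2) by (unfold t'; apply Rmin_l).
    assert (HtD : inD a b t') by (unfold inD in *; lra).
    assert (Rabs (t' - s) < d) by (rewrite Rabs_right; lra).
    specialize (Hloc t' HtD H).
    rewrite (Rabs_right (t' - s)) in Hloc by lra.
    assert (E t').
    { split. lra. destruct HEs as [_ HEs].
      replace (g t' - g x) with ((g t' - g s) + (g s - g x)) by ring.
      eapply Rle_trans. apply Rabs_triang. nra. }
    assert (t' <= s) by (apply Hs1; auto). lra.
  - subst s. destruct HEs; auto.
Qed.

Lemma lip (a b : R) (g g' : R -> R) (L : R) :
  deriv_within (inD a b) g g' -> (forall t, inD a b t -> Rabs (g' t) <= L) ->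
  forall x y, inD a b x -> inD a b y -> Rabs (g y - g x) <= L * Rabs (y - x).
Proof.
  intros Hd HL.
  assert (H : forall x y, inD a b x -> inD a b y -> x <= y -> Rabs (g y - g x) <= L * Rabs (y - x)).
  { intros x y Hx Hy Hxy. rewrite (Rabs_right (y - x)) by lra.
    apply Rle_plus_epsilon. intros eps Heps.
    set (e' := eps / (y - x + 1)).
    assert (He' : 0 < e') by (unfold e'; apply Rdiv_lt_0_compat; lra).
    pose proof (lip_half a b g g' L Hd HL x y Hx Hy Hxy e' He').
    assert (e' * (y - x) <= eps).
    { assert (e' * (y - x + 1) = eps) by (unfold e'; field; lra). nra. }
    nra. }
  intros x y Hx Hy. destruct (Rle_dec x y).
  - auto.
  - rewrite <- Rabs_Ropp, Ropp_minus_distr. rewrite <- (Rabs_Ropp (y - x)), Ropp_minus_distr.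
    apply H; auto; lra.
Qed.

Lemma pow2_pos n : 0 < 2 ^ n.
Proof. apply pow_lt; lra. Qed.

Lemma pow2_ge1 n : 1 <= 2 ^ n.
Proof. induction n; simpl; lra. Qed.

Lemma round_err rd (Hrd : is_rounding rd) n0 m y :
  (1 <= m)%nat -> 2 * Rabs y < 2 ^ n0 -> Rabs (rd m y - y) <= 2 ^ n0 / 2 ^ m.
Proof.
  intros Hm Hy.
  pose proof (pow2_pos n0) as P0. pose proof (pow2_pos m) as Pm.
  assert (Hm2 : 2 <= 2 ^ m).
  { destruct m. lia. simpl. pose proof (pow2_ge1 m). lra. }
  set (w := y * 2 ^ m / 2 ^ n0).
  assert (Hw : Rabs w < 2 ^ m / 2).
  { unfold w. unfold Rdiv. rewrite !Rabs_mult. rewrite (Rabs_right (2^m)) by lra.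
    rewrite (Rabs_right (/ 2 ^ n0)) by (left; apply Rinv_0_lt_compat; lra).
    apply Rmult_lt_reg_r with (2 ^ n0 * 2). lra.
    replace (Rabs y * 2 ^ m * / 2 ^ n0 * (2 ^ n0 * 2)) with (2 * Rabs y * 2 ^ m) by (field; lra).
    replace (2 ^ m * / 2 * (2 ^ n0 * 2)) with (2 ^ n0 * 2 ^ m) by (field; lra).
    nra. }
  set (s := (up w - 1)%Z).
  destruct (archimed w) as [A1 A2].
  assert (Hs : IZR s = IZR (up w) - 1) by (unfold s; rewrite minus_IZR; auto).
  set (g := IZR s * powerRZ 2 (Z.of_nat n0 - Z.of_nat m)).
  assert (Hpz : powerRZ 2 (Z.of_nat n0 - Z.of_nat m) = 2 ^ n0 / 2 ^ m).
  { unfold Z.sub. rewrite powerRZ_add by lra. rewrite powerRZ_neg'.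
    rewrite <- !pow_powerRZ. reflexivity. }
  assert (Hf : is_float m g).
  { exists s, (Z.of_nat n0). split; [|reflexivity].
    assert (Hz : IZR (2 ^ Z.of_nat m) = 2 ^ m) by (rewrite <- pow_IZR; reflexivity).
    apply Rabs_def2 in Hw. destruct Hw as [Hw1 Hw2].
    assert (IZR s < IZR (2 ^ Z.of_nat m)) by lra.
    assert (IZR (- 2 ^ Z.of_nat m) < IZR s) by (rewrite opp_IZR; lra).
    apply lt_IZR in H. apply lt_IZR in H0. lia. }
  destruct (Hrd m y Hm) as [_ Hmin].
  eapply Rle_trans. apply (Hmin g Hf).
  unfold g. rewrite Hpz.
  replace (IZR s * (2 ^ n0 / 2 ^ m) - y) with ((IZR s - w) * (2 ^ n0 / 2 ^ m))
    by (unfold w; field; lra).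
  rewrite Rabs_mult. rewrite (Rabs_right (2 ^ n0 / 2 ^ m)) by (left; apply Rdiv_lt_0_compat; lra).
  rewrite <- (Rmult_1_l (2 ^ n0 / 2 ^ m)) at 2.
  apply Rmult_le_compat_r. left; apply Rdiv_lt_0_compat; lra.
  apply Rabs_le. lra.
Qed.


Lemma pow2_ge_n n : INR n + 1 <= 2 ^ n.
Proof. induction n. simpl; lra. rewrite S_INR. simpl. pose proof (pos_INR n). lra. Qed.

Lemma pow2_unbounded r : exists n, r < 2 ^ n.
Proof.
  destruct (INR_unbounded r) as [n Hn]. exists n. pose proof (pow2_ge_n n). lra.
Qed.

Lemma to_nat_up_lower w : w < INR (Z.to_nat (up w) + 1).
Proof.
  destruct (archimed w) as [A1 A2]. rewrite plus_INR. simpl (INR 1).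
  destruct (Z_le_gt_dec 0 (up w)).
  - rewrite INR_IZR_INZ, Z2Nat.id by auto. lra.
  - assert (IZR (up w) < 0) by (apply IZR_lt; lia). pose proof (pos_INR (Z.to_nat (up w))). lra.
Qed.

Lemma to_nat_up_upper w : INR (Z.to_nat (up w)) <= Rabs w + 1.
Proof.
  destruct (archimed w) as [A1 A2].
  destruct (Z_le_gt_dec 0 (up w)).
  - rewrite INR_IZR_INZ, Z2Nat.id by auto. pose proof (Rle_abs w). lra.
  - assert (Z.to_nat (up w) = 0%nat) by lia. rewrite H. simpl. pose proof (Rabs_pos w). lra.
Qed.

Lemma pow2_ld z : 0 < z -> z <= 2 ^ (Z.to_nat (up (ld z)) + 1).
Proof.
  intros Hz. rewrite <- Rpower_pow by lra. unfold Rpower.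
  pose proof (to_nat_up_lower (ld z)) as H.
  assert (Hl : 0 < ln 2) by (apply ln_lt_0 || (rewrite <- ln_1; apply ln_increasing; lra)).
  assert (ld z * ln 2 = ln z) by (unfold ld; field; lra).
  rewrite <- (exp_ln z) at 1 by auto. rewrite <- H0.
  left. apply exp_increasing. apply Rmult_lt_compat_r; auto.
Qed.

Lemma orbit_in a b f x : (forall y, inD a b y -> inD a b (f y)) -> inD a b x ->
  forall n, inD a b (orbit f x n).
Proof. intros Hf Hx n; induction n; simpl; auto. Qed.

Lemma minabs_le f x N : forall n, (n <= N)%nat -> minabs f x N <= Rabs (orbit f x n).
Proof.
  induction N; intros n Hn.
  - assert (n = 0%nat) by lia. subst. simpl. lra.
  - simpl minabs. destruct (Nat.eq_dec n (S N)).
    + subst. apply Rmin_r.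
    + eapply Rle_trans. apply Rmin_l. apply IHN. lia.
Qed.

Lemma minabs_pos f x : (forall n, orbit f x n <> 0) -> forall N, 0 < minabs f x N.
Proof.
  intros H N; induction N; simpl.
  - apply Rabs_pos_lt. apply (H 0%nat).
  - apply Rmin_glb_lt; auto. apply Rabs_pos_lt. apply (H (S N)).
Qed.
Lemma step_ineq (Q Lam e : R) (n : nat) : 0 <= Q -> 1 <= Lam -> 0 <= e ->
  e <= Q * (2 * Lam) ^ n -> Q + Lam * e <= Q * (2 * Lam) ^ S n.
Proof.
  intros HQ HL He Hb.
  assert (1 <= (2 * Lam) ^ n) by (apply pow_R1_Rle; lra).
  simpl. assert (Lam * e <= Lam * (Q * (2 * Lam) ^ n)) by (apply Rmult_le_compat_l; lra).
  assert (Q <= Q * (Lam * (2 * Lam) ^ n)).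
  { rewrite <- (Rmult_1_r Q) at 1. apply Rmult_le_compat_l; auto.
    replace 1 with (1 * 1) by ring. apply Rmult_le_compat; lra. }
  nra.
Qed.

Lemma err_bound a b f rd Lam n0 x m :
  is_rounding rd -> 1 <= Lam ->
  (forall u v, inD a b u -> inD a b v -> Rabs (f u - f v) <= Lam * Rabs (u - v)) ->
  (forall y, inD a b y -> 2 * Rabs y < 2 ^ n0) ->
  (forall y, inD a b y -> inD a b (f y)) -> inD a b x -> (1 <= m)%nat ->
  (forall n, inD a b (xhat f rd m x n)) ->
  forall n, Rabs (xhat f rd m x n - orbit f x n) <= 2 ^ n0 / 2 ^ m * (2 * Lam) ^ n.
Proof.
  intros Hrd HL Hlip Hn0 Hf Hx Hm Hxh n.
  assert (HQ : 0 <= 2 ^ n0 / 2 ^ m) by (left; apply Rdiv_lt_0_compat; apply pow2_pos).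
  assert (Hor : forall k, inD a b (orbit f x k)) by (intro k; induction k; simpl; auto).
  induction n.
  - simpl. rewrite Rmult_1_r. apply round_err; auto.
  - simpl xhat. simpl orbit.
    replace (rd m (f (xhat f rd m x n)) - f (orbit f x n)) with
      ((rd m (f (xhat f rd m x n)) - f (xhat f rd m x n)) + (f (xhat f rd m x n) - f (orbit f x n))) by ring.
    eapply Rle_trans. apply Rabs_triang.
    eapply Rle_trans. apply Rplus_le_compat.
    apply round_err; auto. apply Hlip; auto.
    apply step_ineq; auto. apply Rabs_pos.
Qed.

Lemma ebar_bound a b f rd Lbar Lam n0 x m :
  (forall c e, inD a b c -> 0 <= e -> 0 <= Lbar c e <= Lam) -> 1 <= Lam ->
  (forall y, inD a b y -> 2 * Rabs y < 2 ^ n0) ->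
  (forall n, inD a b (xhat f rd m x n)) ->
  forall n, 0 <= ebar f rd Lbar m x n <= 2 ^ n0 / 2 ^ m * (2 * Lam) ^ n.
Proof.
  intros HLb HL Hn0 Hxh.
  assert (HQ : 0 <= 2 ^ n0 / 2 ^ m) by (left; apply Rdiv_lt_0_compat; apply pow2_pos).
  assert (Hr : forall n, 0 <= / 2 ^ m * Rabs (xhat f rd m x n) <= 2 ^ n0 / 2 ^ m).
  { intro n. pose proof (Hn0 _ (Hxh n)). pose proof (Rabs_pos (xhat f rd m x n)).
    assert (0 < / 2 ^ m) by (apply Rinv_0_lt_compat, pow2_pos).
    pose proof (pow2_pos n0). unfold Rdiv. split. nra.
    rewrite Rmult_comm. apply Rmult_le_compat_r; lra. }
  intro n; induction n.
  - simpl ebar. rewrite Rmult_1_r. apply (Hr 0%nat).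
  - destruct IHn as [I1 I2].
    pose proof (HLb _ _ (Hxh n) I1) as [L1 L2].
    change (ebar f rd Lbar m x (S n)) with
      (Lbar (xhat f rd m x n) (ebar f rd Lbar m x n) * ebar f rd Lbar m x n
           + / 2 ^ m * Rabs (xhat f rd m x (S n))).
    pose proof (Hr (S n)) as [R1 R2]. split. nra.
    eapply Rle_trans; [|apply (step_ineq _ Lam (ebar f rd Lbar m x n)); auto].
    assert (Lbar (xhat f rd m x n) (ebar f rd Lbar m x n) * ebar f rd Lbar m x n <= Lam * ebar f rd Lbar m x n)
      by (apply Rmult_le_compat_r; lra).
    lra.
Qed.
Lemma Lbar_bounds a b f1 Lbar Lmax K L1 :
  Lbar_spec a b f1 Lbar Lmax K -> (forall y, inD a b y -> Rabs (f1 y) <= L1) ->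
  forall c e, inD a b c -> 0 <= e -> 0 <= Lbar c e <= Lmax.
Proof.
  intros Hs Hf1 c e Hc He.
  assert (HB : bound (Lset a b f1 c e)).
  { exists L1. intros z [y [Hy [_ ->]]]. auto. }
  assert (HE : exists z, Lset a b f1 c e z).
  { exists (Rabs (f1 c)). exists c. unfold inD in *. repeat split; auto; lra. }
  destruct (completeness _ HB HE) as [l Hl].
  assert (Rabs (f1 c) <= l).
  { apply (proj1 Hl). exists c. unfold inD in *. repeat split; auto; lra. }
  pose proof (Rabs_pos (f1 c)).
  destruct (Hs c e l Hc He Hl). pose proof (Rmin_l Lmax (l + K * e)). lra.
Qed.

Lemma accurate_m f rd Lbar (Lam : R) n0 x N p c k :
  1 <= Lam ->
  (forall m n, (1 <= m)%nat -> Rabs (xhat f rd m x n - orbit f x n) <= 2 ^ n0 / 2 ^ m * (2 * Lam) ^ n) ->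
  (forall m n, (1 <= m)%nat -> ebar f rd Lbar m x n <= 2 ^ n0 / 2 ^ m * (2 * Lam) ^ n) ->
  2 * Lam <= 2 ^ c ->
  0 < minabs f x N ->
  2 * 2 ^ n0 / (powerRZ 10 (- p) / (1 + powerRZ 10 (- p)) * minabs f x N) <= 2 ^ k ->
  (1 <= c * N + k)%nat ->
  accurate f rd Lbar (c * N + k) x N p.
Proof.
  intros HL Herr Heb Hc Hmu Hk Hm n Hn.
  set (eps := powerRZ 10 (- p) / (1 + powerRZ 10 (- p))) in *.
  set (mu := minabs f x N) in *.
  assert (Ht : 0 < powerRZ 10 (- p)) by (apply powerRZ_lt; lra).
  assert (He0 : 0 < eps) by (unfold eps; apply Rdiv_lt_0_compat; lra).
  assert (He1 : eps <= 1).
  { unfold eps. apply Rmult_le_reg_r with (1 + powerRZ 10 (- p)). lra.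
    unfold Rdiv. rewrite Rmult_assoc, Rinv_l by lra. lra. }
  set (m := (c * N + k)%nat).
  assert (HQ : 2 ^ n0 / 2 ^ m * (2 * Lam) ^ n <= 2 ^ n0 / 2 ^ k).
  { assert ((2 * Lam) ^ n <= 2 ^ (c * N)).
    { eapply Rle_trans. apply pow_incr. split; [lra| exact Hc].
      rewrite <- pow_mult. apply Rle_pow. lra. apply Nat.mul_le_mono_l; auto. }
    unfold m. rewrite pow_add.
    pose proof (pow2_pos (c * N)). pose proof (pow2_pos k). pose proof (pow2_pos n0).
    unfold Rdiv. rewrite Rinv_mult.
    replace (2 ^ n0 * (/ 2 ^ (c * N) * / 2 ^ k) * (2 * Lam) ^ n) with
      (2 ^ n0 * / 2 ^ k * ((2 * Lam) ^ n * / 2 ^ (c * N))) by ring.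
    rewrite <- (Rmult_1_r (2 ^ n0 * / 2 ^ k)) at 2.
    apply Rmult_le_compat_l. left. apply Rmult_lt_0_compat; auto. apply Rinv_0_lt_compat; auto.
    apply Rmult_le_reg_r with (2 ^ (c * N)); auto.
    rewrite Rmult_assoc, Rinv_l by lra. lra. }
  assert (HQ2 : 2 ^ n0 / 2 ^ k <= eps * mu / 2).
  { pose proof (pow2_pos k). pose proof (pow2_pos n0).
    assert (0 < eps * mu) by (apply Rmult_lt_0_compat; auto).
    apply Rmult_le_compat_r with (r := eps * mu) in Hk; [|lra].
    unfold Rdiv in Hk. rewrite Rmult_assoc, Rinv_l in Hk by lra.
    apply Rmult_le_reg_r with (2 ^ k); auto. unfold Rdiv.
    rewrite Rmult_assoc, Rinv_l by lra. lra. }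
  pose proof (Herr m n Hm). pose proof (Heb m n Hm).
  pose proof (minabs_le f x N n Hn) as Hmn.
  assert (Rabs (orbit f x n) <= Rabs (xhat f rd m x n) + Rabs (xhat f rd m x n - orbit f x n)).
  { replace (orbit f x n) with (xhat f rd m x n - (xhat f rd m x n - orbit f x n)) at 1 by ring.
    apply Rabs_triang_inv2 || (eapply Rle_trans; [apply Rabs_triang|rewrite Rabs_Ropp; lra]). }
  fold mu in Hmn.
  assert (mu / 2 <= Rabs (xhat f rd m x n)) by nra.
  nra.
Qed.

Lemma mmin_unique f rd Lbar x N p m1 m2 :
  is_mmin f rd Lbar x N p m1 -> is_mmin f rd Lbar x N p m2 -> m1 = m2.
Proof.
  intros [A1 [B1 C1]] [A2 [B2 C2]].
  destruct (Nat.lt_total m1 m2) as [H|[H|H]]; auto.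
  - exfalso. apply (C2 m1); auto.
  - exfalso. apply (C1 m2); auto.
Qed.

Lemma core a b f rd Lbar (Lam : R) n0 c x :
  is_rounding rd -> 1 <= Lam ->
  (forall c0 e, inD a b c0 -> 0 <= e -> 0 <= Lbar c0 e <= Lam) ->
  (forall y, inD a b y -> 2 * Rabs y < 2 ^ n0) ->
  (forall u v, inD a b u -> inD a b v -> Rabs (f u - f v) <= Lam * Rabs (u - v)) ->
  2 * Lam <= 2 ^ c ->
  (forall y, inD a b y -> inD a b (f y)) -> inD a b x ->
  standing_assumption f x ->
  (forall m n, (1 <= m)%nat -> inD a b (xhat f rd m x n)) ->
  forall p,
      (exists g : nat -> R,
          Un_cv (fun N => g N / INR N) 0 /\
          forall N : nat, exists m : nat,
            is_mmin f rd Lbar x N p m /\ INR m <= INR c * INR N + g N)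
      /\ (forall s, is_sigma_p f rd Lbar x p s -> s <= INR c).
Proof.
  intros Hrd HL HLb Hn0 Hlip Hc Hf Hx [Hnz Hsa] Hxh p.
  assert (Herr : forall m n, (1 <= m)%nat -> Rabs (xhat f rd m x n - orbit f x n) <= 2 ^ n0 / 2 ^ m * (2 * Lam) ^ n).
  { intros m n Hm. apply (err_bound a b); auto. }
  assert (Heb : forall m n, (1 <= m)%nat -> ebar f rd Lbar m x n <= 2 ^ n0 / 2 ^ m * (2 * Lam) ^ n).
  { intros m n Hm. apply (ebar_bound a b f rd Lbar Lam n0 x m); auto. }
  set (eps := powerRZ 10 (- p) / (1 + powerRZ 10 (- p))).
  assert (Ht : 0 < powerRZ 10 (- p)) by (apply powerRZ_lt; lra).
  assert (He0 : 0 < eps) by (unfold eps; apply Rdiv_lt_0_compat; lra).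
  set (mu := minabs f x).
  assert (Hmu : forall N, 0 < mu N) by (apply minabs_pos; auto).
  set (z1 := 2 * 2 ^ n0 / eps).
  assert (Hz1 : 0 < z1) by (unfold z1; pose proof (pow2_pos n0); apply Rdiv_lt_0_compat; lra).
  set (k := fun N => (Z.to_nat (up (ld (z1 / mu N))) + 1)%nat).
  assert (Hk : forall N, 2 * 2 ^ n0 / (eps * mu N) <= 2 ^ (k N)).
  { intro N. replace (2 * 2 ^ n0 / (eps * mu N)) with (z1 / mu N)
      by (unfold z1; specialize (Hmu N); field; lra).
    apply pow2_ld. apply Rdiv_lt_0_compat; auto. }
  assert (Hacc : forall N, accurate f rd Lbar (c * N + k N) x N p).
  { intro N. apply (accurate_m f rd Lbar Lam n0 x N p c (k N)); auto.
    unfold k; lia. }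
  assert (Hex : forall N, exists m, is_mmin f rd Lbar x N p m /\ (m <= c * N + k N)%nat).
  { intro N.
    destruct (dec_inh_nat_subset_has_unique_least_element
      (fun m => (1 <= m)%nat /\ accurate f rd Lbar m x N p)) as [m [[[Pm1 Pm2] Hleast] _]].
    - intro n. apply classic.
    - exists (c * N + k N)%nat. split; auto. unfold k; lia.
    - exists m. split.
      + split; auto. split; auto. intros m' Hm' Hlt Hacc'.
        specialize (Hleast m' (conj Hm' Hacc')). lia.
      + apply Hleast. split; auto. unfold k; lia. }
  assert (Hkb : forall N, INR (k N) <= Rabs (ld z1) + Rabs (ld (mu N)) + 2).
  { intro N. unfold k. rewrite plus_INR. simpl (INR 1).
    pose proof (to_nat_up_upper (ld (z1 / mu N))).
    assert (ld (z1 / mu N) = ld z1 - ld (mu N)).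
    { unfold ld, Rdiv. rewrite ln_mult, ln_Rinv; auto. ring.
      apply Rinv_0_lt_compat; auto. }
    assert (Rabs (ld (z1 / mu N)) <= Rabs (ld z1) + Rabs (ld (mu N))).
    { rewrite H0. unfold Rminus. pose proof (Rabs_triang (ld z1) (- ld (mu N))).
      rewrite Rabs_Ropp in H1. exact H1. }
    lra. }
  assert (Hcv : Un_cv (fun N => INR (k N) / INR N) 0).
  { intros e He.
    destruct (Hsa (e / 2)) as [N0 HN0]. lra.
    set (K0 := Rabs (ld z1) + 2).
    assert (HK0 : 0 <= K0) by (unfold K0; pose proof (Rabs_pos (ld z1)); lra).
    destruct (INR_unbounded (2 * K0 / e)) as [N1 HN1].
    exists (Nat.max (Nat.max N0 N1) 1). intros N HNg.
    assert (HNN1 : (N1 <= N)%nat) by lia. assert (HNN0 : (N >= N0)%nat) by lia.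
    assert (HN : 0 < INR N) by (apply lt_0_INR; lia).
    specialize (HN0 N HNN0). unfold R_dist in *. rewrite Rminus_0_r in *.
    fold mu in HN0.
    apply le_INR in HNN1.
    pose proof (pos_INR (k N)).
    rewrite Rabs_right by (apply Rle_ge; unfold Rdiv; apply Rmult_le_pos; [lra| left; apply Rinv_0_lt_compat; lra]).
    assert (Rabs (ld (mu N)) / INR N < e / 2).
    { unfold Rdiv at 1. rewrite <- (Rabs_right (/ INR N)) by (left; apply Rinv_0_lt_compat; lra).
      rewrite <- Rabs_mult. exact HN0. }
    assert (K0 / INR N < e / 2).
    { apply Rmult_lt_reg_r with (INR N); auto. unfold Rdiv. rewrite Rmult_assoc, Rinv_l by lra.
      assert (HH : 2 * K0 / e < INR N) by lra.
      apply Rmult_lt_compat_r with (r := e) in HH; auto.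
      unfold Rdiv in HH. rewrite Rmult_assoc, Rinv_l in HH by lra. lra. }
    assert (H3 : INR (k N) / INR N <= (K0 + Rabs (ld (mu N))) / INR N).
    { unfold Rdiv. apply Rmult_le_compat_r. left; apply Rinv_0_lt_compat; auto.
      specialize (Hkb N). unfold K0. lra. }
    unfold Rdiv in *. rewrite Rmult_plus_distr_r in H3. lra. }
  assert (Hbound : forall N m, is_mmin f rd Lbar x N p m -> INR m <= INR c * INR N + INR (k N)).
  { intros N m Hm. destruct (Hex N) as [m' [Hm' Hle]].
    rewrite (mmin_unique _ _ _ _ _ _ _ _ Hm Hm').
    rewrite <- mult_INR, <- plus_INR. apply le_INR; auto. }
  split.
  - exists (fun N => INR (k N)). split; auto.
    intro N. destruct (Hex N) as [m [Hm _]]. exists m. split; auto.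
  - intros s [mm [Hmm [_ Hls]]].
    apply Rle_plus_epsilon. intros e He.
    destruct (Hcv (e / 2)) as [N0 HN0]. lra.
    destruct (Hls (e / 2) ltac:(lra) (Nat.max N0 1)) as [N [HN Hs]].
    assert (HNp : 0 < INR N) by (apply lt_0_INR; lia).
    specialize (HN0 N ltac:(lia)). unfold R_dist in HN0. rewrite Rminus_0_r in HN0.
    pose proof (Rle_abs (INR (k N) / INR N)).
    specialize (Hbound N (mm N) (Hmm N)).
    assert (INR (mm N) / INR N <= INR c + INR (k N) / INR N).
    { apply Rmult_le_reg_r with (INR N); auto. unfold Rdiv.
      rewrite Rmult_plus_distr_r, !Rmult_assoc, Rinv_l by lra. lra. }
    lra.
Qed.

Theorem mainTheorem5
  (a b : R) (f f1 f2 : R -> R) (rd : nat -> R -> R)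
  (Lbar : R -> R -> R) (Lmax K : R) :
  a < b ->
  (forall y, inD a b y -> inD a b (f y)) ->
  deriv_within (inD a b) f f1 ->
  deriv_within (inD a b) f1 f2 ->
  cont_within (inD a b) f2 ->
  (exists M, forall y, inD a b y -> Rabs (f2 y) <= M) ->
  is_rounding rd ->
  0 <= Lmax -> 0 <= K ->
  Lbar_spec a b f1 Lbar Lmax K ->
  exists C : R, 0 <= C /\
    forall (p : Z) (x : R),
      is_rational x -> inD a b x ->
      standing_assumption f x ->
      (forall m n, (1 <= m)%nat -> inD a b (xhat f rd m x n)) ->
      (exists g : nat -> R,
          Un_cv (fun N => g N / INR N) 0 /\
          forall N : nat, exists m : nat,
            is_mmin f rd Lbar x N p m /\ INR m <= C * INR N + g N)
      /\ (forall s, is_sigma_p f rd Lbar x p s -> s <= C)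
      /\ (forall s, is_sigma f rd Lbar x s -> s <= C).
Proof.
  intros Hab Hf Hd1 Hd2 _ [M HM] Hrd HLmax HK Hspec.
  assert (HaD : inD a b a) by (unfold inD; lra).
  assert (HM0 : 0 <= M) by (pose proof (HM a HaD); pose proof (Rabs_pos (f2 a)); lra).
  set (L1 := Rabs (f1 a) + M * (b - a)).
  assert (HL1 : forall y, inD a b y -> Rabs (f1 y) <= L1).
  { intros y Hy. pose proof (lip a b f1 f2 M Hd2 HM a y HaD Hy).
    assert (Rabs (y - a) <= b - a) by (unfold inD in Hy; rewrite Rabs_right; lra).
    assert (Rabs (f1 y) <= Rabs (f1 a) + Rabs (f1 y - f1 a)).
    { replace (f1 y) with (f1 a + (f1 y - f1 a)) at 1 by ring. apply Rabs_triang. }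
    unfold L1. nra. }
  assert (HL10 : 0 <= L1) by (pose proof (HL1 a HaD); pose proof (Rabs_pos (f1 a)); lra).
  set (Lam := 1 + Lmax + L1).
  assert (HLam : 1 <= Lam) by (unfold Lam; lra).
  assert (Hlip : forall u v, inD a b u -> inD a b v -> Rabs (f u - f v) <= Lam * Rabs (u - v)).
  { intros u v Hu Hv. apply (lip a b f f1 Lam Hd1); auto.
    intros t Ht. pose proof (HL1 t Ht). unfold Lam; lra. }
  assert (HLb : forall c0 e, inD a b c0 -> 0 <= e -> 0 <= Lbar c0 e <= Lam).
  { intros c0 e Hc0 He. pose proof (Lbar_bounds a b f1 Lbar Lmax K L1 Hspec HL1 c0 e Hc0 He).
    unfold Lam; lra. }
  destruct (pow2_unbounded (2 * (Rabs a + Rabs b))) as [n0 Hn0].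
  assert (Hn0' : forall y, inD a b y -> 2 * Rabs y < 2 ^ n0).
  { intros y Hy. assert (Rabs y <= Rabs a + Rabs b).
    { apply Rabs_le. unfold inD in Hy. pose proof (Rle_abs a). pose proof (Rle_abs b).
      pose proof (Rle_abs (- a)). rewrite Rabs_Ropp in H1. pose proof (Rabs_pos a).
      pose proof (Rabs_pos b). lra. }
    lra. }
  destruct (pow2_unbounded (2 * Lam)) as [c Hc].
  exists (INR c). split. apply pos_INR.
  intros p x _ Hx Hsa Hxh.
  assert (Hcore := core a b f rd Lbar Lam n0 c x Hrd HLam HLb Hn0' Hlip ltac:(lra) Hf Hx Hsa Hxh).
  destruct (Hcore p) as [P1 P2].
  split; [exact P1|]. split; [exact P2|].
  intros s [sig [Hsig Hconv]].
  apply Rle_plus_epsilon. intros e He.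
  destruct (Hconv e He) as [P HP].
  specialize (HP P (Z.le_refl P)).
  pose proof (proj2 (Hcore P) (sig P) (Hsig P)).
  pose proof (Rle_abs (s - sig P)). rewrite <- Rabs_Ropp in HP.
  replace (- (sig P - s)) with (s - sig P) in HP by ring. lra.
Qed.
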